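(* Let $\varphi$ be the morphism on $\{0,1\}^*$ with $\varphi(0)=010$ and $\varphi(1)=101$. Then $\mathbf{t}'=\varphi(\mathbf{t}_{3/2})$.
   Context: The Thue--Morse word in base $3/2$ is the unique binary sequence $\mathbf{t}_{3/2}=(t_n)_{n\ge0}$ with $t_0=0$, $t_{3n}=t_{3n+1}=t_{2n}$ and $t_{3n+2}=1-t_{2n+1}$ for all $n\ge0$ (equivalently, $t_n$ is the digit sum modulo $2$ of the base-$3/2$ expansion of $n$, where $\langle 0\rangle$ is empty and $\langle n\rangle=\langle m\rangle d$ for $2n=3m+d$, $d\in\{0,1,2\}$). Dekking's word $\mathbf{t}'=(x_n)_{n\ge0}$ is the unique binary infinite word with $x_0=0$ such that $\mathbf{t}'=\beta(x_0x_1)\beta(x_2x_3)\beta(x_4x_5)\cdots$, where $\beta(00)=\beta(01)=010$ and $\beta(10)=\beta(11)=101$. The morphism $\varphi$ is applied letter by letter to the infinite word $\mathbf{t}_{3/2}$. *)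

(* Defs.v *)
(* Binary letters 0,1 are encoded as false,true. *)
From mathcomp Require Import all_boot.
Set Implicit Arguments. Unset Strict Implicit. Unset Printing Implicit Defensive.

(* Base-3/2 expansion: <0> = empty, <n> = <m> d where 2n = 3m + d, d in {0,1,2}.
   Since m < n for n >= 1, fuel n suffices. *)
Fixpoint exp32_fuel (fuel n : nat) : seq nat :=
  match fuel with
  | 0 => [::]
  | fuel'.+1 =>
      if n == 0 then [::]
      else rcons (exp32_fuel fuel' ((2 * n) %/ 3)) ((2 * n) %% 3)
  end.

Definition exp32 (n : nat) : seq nat := exp32_fuel n n.

Definition t32 (n : nat) : bool := odd (sumn (exp32 n)).

Definition phi (a : bool) : seq bool :=
  if a then [:: true; false; true] else [:: false; true; false].

Definition phi_word (w : nat -> bool) (n : nat) : bool :=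
  nth false (phi (w (n %/ 3))) (n %% 3).

Definition beta (a b : bool) : seq bool :=
  match a, b with
  | false, false => [:: false; true; false]
  | false, true => [:: false; true; false]
  | true, false => [:: true; false; true]
  | true, true => [:: true; false; true]
  end.

(* x is Dekking's word: x_0 = 0 and x = beta(x0 x1) beta(x2 x3) beta(x4 x5) ...;
   position n lies in block n/3 at offset n mod 3. *)
Definition is_dekking (x : nat -> bool) : Prop :=
  x 0 = false /\
  forall n, x n = nth false (beta (x (2 * (n %/ 3))) (x (2 * (n %/ 3) + 1))) (n %% 3).

(* Main.v *)
Require Import Defs.
From mathcomp Require Import all_boot.
From mathcomp Require Import zify.

Lemma fuel_ok f g n : n <= f -> n <= g -> exp32_fuel f n = exp32_fuel g n.
Proof.
elim: f g n => [|f IH] [|g] n /=; case: (n =P 0) => // Hn; try lia.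
move=> Hf Hg; congr rcons; apply: IH; lia.
Qed.

Lemma exp32_S k : 0 < k -> exp32 k = rcons (exp32 ((2 * k) %/ 3)) ((2 * k) %% 3).
Proof.
move=> Hk; rewrite /exp32; case: k Hk => // k _ /=.
congr rcons; apply: fuel_ok; lia.
Qed.

Lemma beta_phi a b : beta a b = phi a.
Proof. by case: a; case: b. Qed.

Lemma key k : phi_word t32 (2 * k) = t32 k.
Proof.
rewrite /phi_word.
case: k => [|k]; first by [].
have -> : t32 k.+1 = t32 ((2 * k.+1) %/ 3) (+) odd ((2 * k.+1) %% 3).
  by rewrite {1}/t32 exp32_S // -cats1 sumn_cat /= addn0 oddD.
have : (2 * k.+1) %% 3 < 3 by apply: ltn_pmod.
case: ((2 * k.+1) %% 3) => [|[|[|]]] //= _; by case: (t32 _).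
Qed.

Theorem lemma4 :
  is_dekking (phi_word t32) /\
  forall x : nat -> bool, is_dekking x -> forall n, x n = phi_word t32 n.
Proof.
split.
  split; first by [].
  by move=> n; rewrite beta_phi key.
move=> x [H0 Hx] n.
elim: n {-2}n (leqnn n) => [|N IH] n Hn.
  by have -> : n = 0 by lia.
case: n Hn => [|n] Hn; first by rewrite H0.
rewrite Hx beta_phi IH; last by lia.
by rewrite key.
Qed.
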